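(* Let $\mathcal{H}=(V,E)$ be a linear hypergraph with $n$ vertices and let $k=\mathrm{ar}(\mathcal{H})$ be its antirank. If $k^2>n$ then $$|E|\le \frac{n(k-1)}{k^2-n}\qquad\text{and}\qquad \Delta(\mathcal{H})\le k.$$
   Context: A hypergraph $\mathcal{H}=(V,E)$ has a finite vertex set $V$ and a finite set $E$ of nonempty subsets of $V$ (hyperedges). It is linear if $|e\cap e'|\le 1$ for all distinct $e,e'\in E$. The antirank $\mathrm{ar}(\mathcal{H})$ is the minimum cardinality of a hyperedge. $\Delta(\mathcal{H})$ is the maximum over vertices $x$ of the degree $\mathrm{deg}_{\mathcal{H}}(x)$, the number of hyperedges containing $x$. *)

(* Defs.v *)
From mathcomp Require Import all_boot all_order all_algebra.
Set Implicit Arguments. Unset Strict Implicit. Unset Printing Implicit Defensive.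

Definition hypergraph (V : finType) (E : {set {set V}}) : Prop :=
  forall e, e \in E -> e != set0.

Definition linear_hg (V : finType) (E : {set {set V}}) : Prop :=
  forall e e', e \in E -> e' \in E -> e != e' -> #|e :&: e'| <= 1.

Definition is_antirank (V : finType) (E : {set {set V}}) (k : nat) : Prop :=
  (exists2 e, e \in E & #|e| = k) /\ (forall e, e \in E -> k <= #|e|).

Definition hdeg (V : finType) (E : {set {set V}}) (x : V) : nat :=
  #|[set e in E | x \in e]|.

Definition maxdeg (V : finType) (E : {set {set V}}) : nat :=
  \max_(x : V) hdeg E x.

(* Main.v *)
Require Import Defs.
From mathcomp Require Import all_boot all_order all_algebra zify.
Import Order.TTheory GRing.Theory Num.Theory.

Lemma dc (V : finType) (E' : {set {set V}}) (A : {set V}) (f : V -> nat) :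
 \sum_(y in A) #|[set e in E' | y \in e]| * f y = \sum_(e in E') \sum_(y in e :&: A) f y.
Proof.
transitivity (\sum_(y in A) \sum_(e in E' | y \in e) f y).
  by apply: eq_bigr => y _; rewrite sum_nat_const; congr (_ * _); apply: eq_card => e; rewrite inE.
rewrite (exchange_big_dep (fun e => e \in E')) /=; last by move=> y e _ /andP[].
apply: eq_bigr => e eE; apply: eq_bigl => y; rewrite inE eE.
by case: (y \in e); case: (y \in A).
Qed.

Lemma degb (V : finType) (E : {set {set V}}) (k : nat) (x : V) :
  linear_hg E -> (forall e, e \in E -> k <= #|e|) ->
  hdeg E x * (k - 1) <= #|V| - 1.
Proof.
move=> lin kmin.
set D := [set e in E | x \in e].
have := @dc _ D [set~ x] (fun _ => 1).
under eq_bigr do rewrite muln1.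
under [in X in _ = X -> _]eq_bigr do rewrite sum1_card.
move=> H.
apply: (@leq_trans (\sum_(e in D) #|e :&: [set~ x]|)).
  rewrite /hdeg -/D -sum_nat_const; apply: leq_sum => e; rewrite inE => /andP[eE xe].
  have := kmin e eE; have := cardsD1 x e; rewrite xe setDE => -> /=.
  rewrite add1n; lia.
rewrite -H (_ : #|V| - 1 = #|[set~ x]|); last by rewrite cardsC1 subn1.
rewrite -sum1_card; apply: leq_sum => y; rewrite !inE => yx.
apply/card_le1_eqP => e1 e2; rewrite !inE => /andP[/andP[e1E xe1] ye1] /andP[/andP[e2E xe2] ye2].
apply/eqP; apply: contraNT yx => ne.
have := lin _ _ e2E e1E ne.
have xI : x \in e2 :&: e1 by rewrite inE xe1 xe2.
rewrite (cardsD1 x) xI add1n ltnS leqn0 cards_eq0 => /eqP h.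
apply/negPn/negP => yx'. have : y \in (e2 :&: e1) :\ x by rewrite !inE yx' ye1 ye2.
by rewrite h inE.
Qed.

Lemma Sb (V : finType) (E : {set {set V}}) (k : nat) :
  (forall e, e \in E -> k <= #|e|) ->
  #|E| * k <= \sum_x hdeg E x.
Proof.
move=> kmin.
have := @dc _ E setT (fun _ => 1).
under eq_bigr do rewrite muln1.
under [in X in _ = X -> _]eq_bigr do rewrite sum1_card setIT.
rewrite (eq_bigl predT) => [H|y]; last by rewrite inE.
rewrite /hdeg H -sum_nat_const; apply: leq_sum => e; exact: kmin.
Qed.

Lemma Qb (V : finType) (E : {set {set V}}) :
  linear_hg E ->
  \sum_x hdeg E x * (hdeg E x - 1) <= #|E| * (#|E| - 1).
Proof.
move=> lin.
have := @dc _ E setT (fun y => hdeg E y - 1).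
rewrite (eq_bigl predT) => [->|y]; last by rewrite inE.
rewrite -sum_nat_const; apply: leq_sum => e eE; rewrite setIT.
have H : \sum_(y in e) #|[set e0 in E :\ e | y \in e0]| = \sum_(e' in E :\ e) #|e' :&: e|.
  have := @dc _ (E :\ e) e (fun _ => 1).
  under eq_bigr do rewrite muln1.
  by under [in X in _ = X -> _]eq_bigr do rewrite sum1_card.
apply: (@leq_trans (\sum_(y in e) #|[set e0 in E :\ e | y \in e0]|)).
  apply: eq_leq; apply: eq_bigr => y ye.
  rewrite /hdeg (cardsD1 e) inE eE ye add1n subn1 /=; apply: eq_card => e'.
  by rewrite !inE; case: (e' == e); case: (e' \in E); case: (y \in e').
rewrite H (_ : #|E| - 1 = #|E :\ e|); last by rewrite (cardsD1 e E) eE add1n subn1.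
rewrite -sum1_card; apply: leq_sum => e'; rewrite !inE => /andP[ne e'E].
exact: lin.
Qed.
Lemma arith n m k S P Q: 0 < n -> 0 < m -> 0 < k -> m * k <= S -> Q <= m * (m - 1) -> P = Q + S -> 2 * (m * k) * S <= n * P + (m * k) * (m * k) -> m * (k * k) <= n * m + n * (k - 1).
Proof.
move=> n0 m0 k0 hS hQ hP hC.
have eM : n * m + n * (k - 1) = n * (m - 1) + n * k.
  by rewrite -!mulnDr; congr (_ * _); lia.
rewrite eM.
case: (leqP n (2 * (m * k))) => h2.
- set T := m * k in hS hC h2.
  have h3 : (2 * T - n) * T <= (2 * T - n) * S by apply: leq_mul.
  have e1 : (2 * T - n) * S + n * S = 2 * T * S by rewrite -mulnDl subnK.
  have e2 : (2 * T - n) * T + n * T = 2 * T * T by rewrite -mulnDl subnK.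
  have hQ' : n * Q <= n * (m * (m - 1)) by rewrite leq_mul2l hQ orbT.
  rewrite hP mulnDr in hC.
  have h4 : T * T <= n * (m * (m - 1)) + n * T.
    move: h3 e1 e2 hQ' hC; rewrite mulnA.
    set a := (2 * T - n) * T; set b := (2 * T - n) * S; set c := n * S;
    set d := 2 * T * S; set f := n * T; set g := T * T; set q := n * Q.
    move=> *. have : 2 * T * T = 2 * g by rewrite /g mulnA. lia.
  rewrite /T in h4.
  have e3 : n * (m * (m - 1)) + n * (m * k) = m * (n * (m - 1) + n * k).
    by rewrite mulnDr !mulnA (mulnC n m).
  have e4 : m * k * (m * k) = m * (m * (k * k)).
    by rewrite -!mulnA; congr (_ * _); rewrite mulnCA.
  rewrite e3 e4 leq_pmul2l // in h4.
- have h5 : 2 * (m * k) * k <= n * k by rewrite leq_mul2r (ltnW h2) orbT.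
  have h6 : n * k <= 2 * (n * (m - 1) + n * k).
    rewrite -mulnDr mulnCA leq_mul2l; apply/orP; right; lia.
  have e5 : 2 * (m * k) * k = 2 * (m * (k * k)) by rewrite -!mulnA.
  rewrite e5 in h5.
  have := leq_trans h5 h6. rewrite leq_mul2l /=. done.
Qed.

Lemma cauchy (V : finType) (d : V -> nat) (T : nat) :
  2 * #|V| * T * (\sum_x d x) <= #|V| * #|V| * (\sum_x d x * d x) + #|V| * (T * T).
Proof.
set n := #|V|.
have H : \sum_x 2 * n * T * d x <= \sum_x (n * n * (d x * d x) + T * T).
  apply: leq_sum => x _; have := (nat_Cauchy (n * d x) T).1.
  rewrite !expnS ?expn1 ?expn0 ?muln1; lia.
rewrite big_split /= -!big_distrr /= sum_nat_const in H.
by move: H; rewrite (_ : #|xpredT| = n) // mulnCA.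
Qed.

Theorem lemma3p1 (V : finType) (E : {set {set V}}) (k : nat) :
  hypergraph E -> linear_hg E -> is_antirank E k ->
  #|V| < k ^ 2 ->
  ((#|E|%:R : rat) <= (#|V| * (k - 1))%:R / ((k ^ 2)%:R - #|V|%:R))%R
  /\ maxdeg E <= k.
Proof.
move=> hE lin [[e0 e0E ce0] kmin] hn.
have k0 : 0 < k by rewrite -ce0 card_gt0; exact: hE.
have [x0 x0e0] : exists x, x \in e0 by apply/set0Pn; exact: hE.
have n0 : 0 < #|V| by apply/card_gt0P; exists x0.
have m0 : 0 < #|E| by apply/card_gt0P; exists e0.
split; last first.
  apply/bigmax_leqP => x _.
  have := @degb _ E k x lin kmin.
  move: hn; rewrite expnS expn1 => hn hd.
  clear ce0 kmin; case: k k0 hn hd => // [[|k]] _ hn hd; first lia.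
  move: hd; rewrite subn1 /= => hd.
  have e : k.+2 * k.+2 = (k.+3 * k.+1).+1 by rewrite !mulSn !mulnS !addSn !addnS addnA. 
  have : hdeg E x * k.+1 < k.+3 * k.+1.
    apply: (leq_ltn_trans hd); move: hn; rewrite e. move=> h; rewrite ltnS in h; apply: leq_trans h; by rewrite subn1 prednK.
  by rewrite ltn_mul2r /= ltnS.
have hd := @Sb _ E k kmin.
have hQ := @Qb _ E lin.
have hP : \sum_x hdeg E x * hdeg E x = \sum_x hdeg E x * (hdeg E x - 1) + \sum_x hdeg E x.
  rewrite -big_split /=; apply: eq_bigr => x _.
  case: (hdeg E x) => // a; by rewrite subn1 /= mulnSr.
have hC := @cauchy _ (hdeg E) (#|E| * k).
have hC' : 2 * (#|E| * k) * (\sum_x hdeg E x) <= #|V| * (\sum_x hdeg E x * hdeg E x) + (#|E| * k) * (#|E| * k).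
  move: hC; rewrite !mulnA => hC; rewrite -(leq_pmul2l n0) mulnDr !mulnA (mulnC #|V| 2). exact hC.
have key := @arith #|V| #|E| k _ _ _ n0 m0 k0 hd hQ hP hC'.
have kn : ((#|V|%:R : rat) < (k ^ 2)%:R)%R by rewrite ltr_nat.
rewrite ler_pdivlMr ?subr_gt0 // mulrBr lerBlDr -!natrM -natrD ler_nat.
idtac; rewrite expnS expn1 addnC mulnC (mulnC #|E| #|V|) -mulnDr. by rewrite mulnDr mulnC.
Qed.
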